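(* Let $p$ be a prime, $n\ge1$, $(n_1,\dots,n_s)$ a partition of $n$, and for each $i$ let $1,\omega_i,\dots,\omega_i^{n_i-1}$ be a basis of $\mathbb{F}_{p^{n_i}}$ over $\mathbb{F}_p$ (with $\omega_i$ a root of an irreducible polynomial of degree $n_i$ over $\mathbb{F}_p$). Let $\mathbf{z}=(z_1,\dots,z_s)$ with $z_i\in\mathbb{F}_{p^{n_i}}\setminus\{0\}$. Let $A,A'\in\mathrm{GL}_n(\mathbb{F}_p)$, whose rows, indexed in blocks as $(i,j)$ with $1\le i\le s$, $1\le j\le n_i$, define linear forms $L_{i,j}$ and $L'_{i,j}$ respectively, and put $\lambda_i(\mathbf{x})=\sum_{j}L_{i,j}(\mathbf{x})\omega_i^{j-1}$, $\lambda_i'(\mathbf{y})=\sum_jL'_{i,j}(\mathbf{y})\omega_i^{j-1}$. Define the lattice $$\mathcal{L}_{\mathbf{z}}=\{(\mathbf{x},\mathbf{y})\in\mathbb{Z}^{2n}:\lambda_i(\mathbf{x})=z_i\lambda_i'(\mathbf{y})\text{ in }\mathbb{F}_{p^{n_i}}\text{ for }1\le i\le s\}.$$ Then there exist $A'',A'''\in\mathrm{GL}_n(\mathbb{F}_p)$, with associated linear forms $L''_{i,j},L'''_{i,j}$ and $\lambda_i''(\mathbf{v})=\sum_jL''_{i,j}(\mathbf{v})\omega_i^{j-1}$, $\lambda_i'''(\mathbf{u})=\sum_jL'''_{i,j}(\mathbf{u})\omega_i^{j-1}$, such that $$p\mathcal{L}_{\mathbf{z}}^*=\{(\mathbf{u},\mathbf{v})\in\mathbb{Z}^{2n}:\lambda_i''(\mathbf{v})=z_i\lambda_i'''(\mathbf{u})\text{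 in }\mathbb{F}_{p^{n_i}}\text{ for }1\le i\le s\}.$$
   Context: The dual lattice of a full-rank lattice $\mathcal{L}\subseteq\mathbb{R}^m$ is $\mathcal{L}^*=\{\mathbf{u}\in\mathbb{R}^m:\langle\mathbf{u},\mathbf{x}\rangle\in\mathbb{Z}\ \forall\mathbf{x}\in\mathcal{L}\}$. Linear forms over $\mathbb{F}_p$ are evaluated at integer vectors by reduction mod $p$. *)

(* Defs.v *)
From HB Require Import structures.
From mathcomp Require Import all_boot all_order all_algebra all_field.
From mathcomp Require Import reals.
Set Implicit Arguments. Unset Strict Implicit. Unset Printing Implicit Defensive.
Import Order.TTheory GRing.Theory Num.Theory.
Local Open Scope ring_scope.

(* The rows of a matrix
   A : 'M['F_p]_(\sum_i ns i) are indexed in blocks (i, j), i < s, j < ns i,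
   via the standard block index [tagnat.Rank i j] (row number
   ns 0 + ... + ns (i-1) + j). *)
Definition lform (p s : nat) (ns : 'I_s -> nat)
    (A : 'M['F_p]_(\sum_(i < s) ns i)) (i : 'I_s) (j : 'I_(ns i))
    (x : 'rV[int]_(\sum_(i < s) ns i)) : 'F_p :=
  \sum_k A (tagnat.Rank i j) k * (x 0 k)%:~R.

(* lambda_i(x) = sum_j L_{i,j}(x) omega_i^(j-1)  (0-based: omega_i ^+ j). *)
Definition lam (p s : nat) (ns : 'I_s -> nat)
    (K : 'I_s -> fieldExtType 'F_p) (w : forall i, K i)
    (A : 'M['F_p]_(\sum_(i < s) ns i)) (i : 'I_s)
    (x : 'rV[int]_(\sum_(i < s) ns i)) : K i :=
  \sum_(j < ns i) lform A j x *: (w i) ^+ j.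

Definition inLz (p s : nat) (ns : 'I_s -> nat)
    (K : 'I_s -> fieldExtType 'F_p) (w : forall i, K i) (z : forall i, K i)
    (A A' : 'M['F_p]_(\sum_(i < s) ns i))
    (x y : 'rV[int]_(\sum_(i < s) ns i)) : Prop :=
  forall i : 'I_s, lam w A i x = z i * lam w A' i y.

Definition in_dual (R : realType) (m : nat)
    (Lat : 'rV[int]_m -> 'rV[int]_m -> Prop) (a b : 'rV[R]_m) : Prop :=
  forall x y : 'rV[int]_m, Lat x y ->
    (\sum_(k < m) a 0 k * (x 0 k)%:~R + \sum_(k < m) b 0 k * (y 0 k)%:~R)
      \is a Num.int.

(* Main.v *)
Require Import Defs.
From HB Require Import structures.
From mathcomp Require Import all_boot all_order all_algebra all_field.
From mathcomp Require Import reals.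
Import Order.TTheory GRing.Theory Num.Theory.
Local Open Scope ring_scope.

Section PhiSec.
Variables (p s : nat) (ns : 'I_s -> nat) (K : 'I_s -> fieldExtType 'F_p)
  (w : forall i, K i).
Local Notation n := (\sum_(i < s) ns i).

Definition Phi (t : 'rV['F_p]_n) (i : 'I_s) : K i :=
  \sum_(j < ns i) t 0 (tagnat.Rank i j) *: w i ^+ j.

Definition bar (x : 'rV[int]_n) : 'rV['F_p]_n := map_mx (fun t : int => t%:~R) x.

Lemma lamE A i x : lam w A i x = Phi (bar x *m A^T) i.
Proof.
rewrite /lam /Phi; apply: eq_bigr => j _; congr (_ *: _).
rewrite /lform !mxE; apply: eq_bigr => k _; by rewrite !mxE mulrC.
Qed.

Lemma Phi_mul t (M : 'M_n) i : Phi (t *m M) i = \sum_k t 0 k *: Phi (row k M) i.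
Proof.
rewrite /Phi.
under eq_bigr => j _ do rewrite mxE scaler_suml.
rewrite exchange_big /=; apply: eq_bigr => k _.
rewrite scaler_sumr; apply: eq_bigr => j _; by rewrite mxE scalerA.
Qed.

Lemma PhiB t t' i : Phi (t - t') i = Phi t i - Phi t' i.
Proof.
rewrite /Phi -sumrB; apply: eq_bigr => j _; by rewrite !mxE scalerBl.
Qed.

Hypothesis hbasis : forall i, basis_of {: K i} (mkseq (fun j => w i ^+ j) (ns i)).

Definition Xt i : (ns i).-tuple (K i) := Tuple (introT eqP (size_mkseq (fun j => w i ^+ j) (ns i))).

Lemma Xt_nth i (j : 'I_(ns i)) : (Xt i)`_j = w i ^+ j.
Proof. by rewrite /= nth_mkseq. Qed.

Lemma Phi_inj t t' : (forall i, Phi t i = Phi t' i) -> t = t'.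
Proof.
move=> H.
suff H2 : forall i j, t 0 (tagnat.Rank i j) = t' 0 (tagnat.Rank i j).
  apply/rowP => k; rewrite -(tagnat.sig2K k); exact: H2.
move=> i j; apply/eqP; rewrite -subr_eq0; apply/eqP.
have /freeP Hf := basis_free (hbasis i : basis_of _ (Xt i)).
apply: (Hf (fun j => t 0 (tagnat.Rank i j) - t' 0 (tagnat.Rank i j))).
under eq_bigr => k _ do rewrite Xt_nth.
transitivity (Phi (t - t') i); first by apply: eq_bigr => k _; rewrite !mxE.
by rewrite PhiB H subrr.
Qed.

Definition Psi (f : forall i, K i) : 'rV['F_p]_n :=
  \row_k (fun q : {i : 'I_s & 'I_(ns i)} =>
            coord (Xt (tag q)) (tagged q) (f (tag q))) (tagnat.sig k).

Lemma PhiPsi f i : Phi (Psi f) i = f i.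
Proof.
rewrite [RHS](coord_basis (hbasis i : basis_of _ (Xt i))) ?memvf //.
rewrite /Phi; apply: eq_bigr => j _.
by rewrite mxE /tagnat.Rank tagnat.rankK /= Xt_nth.
Qed.

Definition Mz (z : forall i, K i) : 'M['F_p]_n :=
  \matrix_(k, l) Psi (fun i => z i * Phi (delta_mx 0 k) i) 0 l.

Lemma PhiMz z t i : Phi (t *m Mz z) i = z i * Phi t i.
Proof.
rewrite Phi_mul -[t in RHS]mulmx1 Phi_mul mulr_sumr; apply: eq_bigr => k _.
rewrite row1 -scalerAr -(PhiPsi (fun i => z i * Phi (delta_mx 0 k) i)).
congr (_ *: _); congr (Phi _ i); apply/rowP => l; by rewrite !mxE.
Qed.

Lemma Mz_unit z : (forall i, z i != 0) -> Mz z \in unitmx.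
Proof.
move=> nz.
have H : Mz z *m Mz (fun i => (z i)^-1) = 1%:M.
  apply/row_matrixP => k; rewrite row1 rowE mulmxA.
  apply: Phi_inj => i; by rewrite PhiMz PhiMz mulrA mulVf ?mul1r ?nz.
by case: (mulmx1_unit H).
Qed.

Definition dot (u x : 'rV[int]_n) : int := \sum_k u 0 k * x 0 k.
Definition lift (y : 'rV['F_p]_n) : 'rV[int]_n :=
  map_mx (fun t : 'F_p => (nat_of_ord t)%:Z) y.

Lemma bar_lift y : bar (lift y) = y.
Proof. by apply/rowP => k; rewrite !mxE; exact: natr_Zp. Qed.

Lemma bar0 : bar 0 = 0.
Proof. by apply/rowP => k; rewrite !mxE. Qed.

Lemma dotF u x : ((dot u x)%:~R : 'F_p) = (bar x *m (bar u)^T) 0 0.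
Proof.
rewrite !mxE rmorph_sum; apply: eq_bigr => k _; by rewrite !mxE rmorphM mulrC.
Qed.

Lemma sumZ (R : realType) (r : R) (c : 'rV[R]_n) (X : 'I_n -> R) :
  \sum_k (r *: c) 0 k * X k = r * \sum_k c 0 k * X k.
Proof. rewrite mulr_sumr; apply: eq_bigr => k _; by rewrite mxE mulrA. Qed.

Lemma dotR (R : realType) (u x : 'rV[int]_n) :
  \sum_k (map_mx (fun t : int => (t%:~R : R)) u) 0 k * (x 0 k)%:~R = (dot u x)%:~R.
Proof. rewrite rmorph_sum; apply: eq_bigr => k _; by rewrite mxE rmorphM. Qed.

Lemma DotF (u v : 'M['F_p]_(1, n)) (D : 'M['F_p]_n) :
  (forall y : 'rV['F_p]_n, ((y *m D) *m u^T + y *m v^T) 0 0 = 0) <->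
  v = - (u *m D^T).
Proof.
split=> [H | ->].
  have M0 : D *m u^T + v^T = 0.
    apply/row_matrixP => k; rewrite row0 rowE mulmxDr mulmxA.
    by apply/matrixP => i j; rewrite !ord1 H mxE.
  by rewrite -[v]trmxK -[v^T](addKr (D *m u^T)) M0 addr0 linearN /= trmx_mul trmxK.
move=> y; by rewrite linearN /= trmx_mul trmxK mulmxN mulmxA addrN mxE.
Qed.

Definition Cm z (A A' : 'M['F_p]_n) := A'^T *m Mz z *m invmx (A^T).

Lemma Lz_iff z A A' x y : A \in unitmx ->
  inLz w z A A' x y <-> bar x = bar y *m Cm z A A'.
Proof.
move=> hA; have hAt : A^T \in unitmx by rewrite unitmx_tr.
split=> [H | E].
  have E : bar x *m A^T = bar y *m A'^T *m Mz z.
    by apply: Phi_inj => i; rewrite PhiMz -!lamE.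
  by rewrite /Cm !mulmxA -E mulmxK.
move=> i; rewrite !lamE.
have -> : bar x *m A^T = bar y *m A'^T *m Mz z.
  by rewrite E /Cm !mulmxA mulmxKV.
by rewrite PhiMz.
Qed.

Definition A3 z (C : 'M['F_p]_n) := ((-1) *: (C^T *m invmx (Mz z)))^T.

Lemma target_iff z C u v : (forall i, z i != 0) ->
  (forall i, lam w 1%:M i v = z i * lam w (A3 z C) i u) <-> bar v = - (bar u *m C^T).
Proof.
move=> nz; have hM := Mz_unit z nz.
have E0 : bar u *m (A3 z C)^T *m Mz z = - (bar u *m C^T).
  by rewrite /A3 trmxK -scalemxAr -scalemxAl mulmxA mulmxKV // scaleN1r.
split=> [H | E].
  rewrite -E0; apply: Phi_inj => i.
  by rewrite PhiMz -lamE -H lamE trmx1 mulmx1.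
by move=> i; rewrite !lamE -PhiMz E0 trmx1 mulmx1 E.
Qed.

Lemma pR0 (R : realType) : prime p -> (p%:R : R) != 0.
Proof. by move=> pp; rewrite pnatr_eq0 -lt0n prime_gt0. Qed.

Lemma entryE (C : 'M['F_p]_n) u v x y : bar x = bar y *m C ->
  ((bar y *m C) *m (bar u)^T + bar y *m (bar v)^T) 0 0 =
  ((dot u x + dot v y)%:~R : 'F_p).
Proof. by move=> E; rewrite -E mxE rmorphD /= !dotF. Qed.

Lemma dual_iff (R : realType) z A A' (a b : 'rV[R]_n) : prime p -> A \in unitmx ->
  (exists c d : 'rV[R]_n,
      in_dual (inLz w z A A') c d /\ a = p%:R *: c /\ b = p%:R *: d)
  <->
  (exists u v : 'rV[int]_n,
      [/\ a = map_mx (fun t : int => t%:~R) u,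
          b = map_mx (fun t : int => t%:~R) v &
          bar v = - (bar u *m (Cm z A A')^T)]).
Proof.
move=> pp hA; set C := Cm z A A'.
split.
  case=> c [d [Hd [Ha Hb]]].
  pose ek (k : 'I_n) : 'rV[int]_n := \row_l (if l == k then p%:Z else 0).
  have bek k : bar (ek k) = 0.
    apply/rowP => l; rewrite !mxE; case: (l == k) => //.
    by rewrite /= -pmulrn pchar_Fp_0.
  have sek (e : 'rV[R]_n) k : \sum_l e 0 l * ((ek k) 0 l)%:~R = p%:R * e 0 k.
    rewrite (bigD1 k) //= [X in _ + X]big1 => [|l /negbTE nlk]; last by rewrite mxE nlk mulr0.
    by rewrite addr0 mxE eqxx mulrC.
  have s0 (e : 'rV[R]_n) : \sum_l e 0 l * ((0 : 'rV[int]_n) 0 l)%:~R = 0.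
    by rewrite big1 // => l _; rewrite mxE mulr0.
  have intc k : a 0 k \is a Num.int.
    have Hin : inLz w z A A' (ek k) 0.
      by apply/(@Lz_iff z A A' _ _ hA); rewrite bek bar0 mul0mx.
    by have := Hd _ _ Hin; rewrite sek s0 addr0 Ha mxE.
  have intd k : b 0 k \is a Num.int.
    have Hin : inLz w z A A' 0 (ek k).
      by apply/(@Lz_iff z A A' _ _ hA); rewrite bek bar0 mul0mx.
    by have := Hd _ _ Hin; rewrite sek s0 add0r Hb mxE.
  exists (\row_k Num.floor (a 0 k)), (\row_k Num.floor (b 0 k)).
  have Hau : a = map_mx (fun t : int => t%:~R) (\row_k Num.floor (a 0 k)).
    apply/rowP => k; rewrite !mxE; apply/esym/eqP; rewrite -intrEfloor; exact: intc.
  have Hbv : b = map_mx (fun t : int => t%:~R) (\row_k Num.floor (b 0 k)).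
    apply/rowP => k; rewrite !mxE; apply/esym/eqP; rewrite -intrEfloor; exact: intd.
  split=> //.
  set u := \row_k Num.floor (a 0 k) in Hau *; set v := \row_k Num.floor (b 0 k) in Hbv *.
  apply/DotF => y'.
  pose x := lift (y' *m C); pose y := lift y'.
  have Exy : bar x = bar y *m C by rewrite !bar_lift.
  have := @entryE C u v x y Exy; rewrite bar_lift => ->.
  have Hin : inLz w z A A' x y by apply/(@Lz_iff z A A' _ _ hA).
  have /intrP [m Hm] := Hd _ _ Hin.
  have EN : dot u x + dot v y = p%:Z * m.
    apply/eqP; rewrite -(eqr_int R) rmorphD /= -!dotR -Hau -Hbv Ha Hb !sumZ.
    by rewrite -mulrDr Hm rmorphM.
  by rewrite EN rmorphM /= -pmulrn pchar_Fp_0 // mul0r.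
case=> u [v [Hau Hbv Hc]].
exists ((p%:R)^-1 *: a), ((p%:R)^-1 *: b).
have hp := pR0 R pp.
split; last by rewrite !scalerA mulfV // !scale1r.
move=> x y /(@Lz_iff z A A' _ _ hA) Exy.
have := (DotF (bar u) (bar v) C).2 Hc (bar y); rewrite (@entryE C u v x y Exy).
move/eqP; rewrite -(dvdz_pcharf (pchar_Fp pp)) => hdiv.
rewrite !sumZ -mulrDr Hau Hbv !dotR -rmorphD /= -(divzK hdiv) rmorphM /=.
by rewrite mulrC -mulrA mulfV // mulr1 intr_int.
Qed.
End PhiSec.

Theorem proposition5p2 (R : realType) (p : nat) (s : nat) (ns : 'I_s -> nat)
    (K : 'I_s -> fieldExtType 'F_p) (w : forall i, K i) (z : forall i, K i)
    (A A' : 'M['F_p]_(\sum_(i < s) ns i)) :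
  prime p ->
  (0 < \sum_(i < s) ns i)%N ->
  (forall i, 0 < ns i)%N ->
  (forall i, \dim {: K i} = ns i) ->
  (forall i, basis_of {: K i} (mkseq (fun j => w i ^+ j) (ns i))) ->
  (forall i, z i != 0) ->
  A \in unitmx -> A' \in unitmx ->
  exists A'' A''' : 'M['F_p]_(\sum_(i < s) ns i),
    [/\ A'' \in unitmx, A''' \in unitmx &
      forall a b : 'rV[R]_(\sum_(i < s) ns i),
        (exists c d : 'rV[R]_(\sum_(i < s) ns i),
            in_dual (inLz w z A A') c d /\ a = p%:R *: c /\ b = p%:R *: d)
        <->
        (exists u v : 'rV[int]_(\sum_(i < s) ns i),
            [/\ a = map_mx (fun t : int => t%:~R) u,
                b = map_mx (fun t : int => t%:~R) v &
                forall i : 'I_s, lam w A'' i v = z i * lam w A''' i u])].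
Proof.
move=> pp _ _ _ hb nz hA hA'.
pose C := @Cm p s ns K w z A A'.
have hM := @Mz_unit p s ns K w hb z nz.
exists 1%:M, (@A3 p s ns K w z C).
split.
- exact: unitmx1.
- rewrite /A3 unitmx_tr unitmxZ ?unitrN1 // unitmx_mul unitmx_tr unitmx_inv hM andbT.
  by rewrite /C /Cm !unitmx_mul unitmx_tr hA' hM unitmx_inv unitmx_tr hA.
- move=> a b.
  apply: iff_trans (@dual_iff p s ns K w hb R z A A' a b pp hA) _.
  split; case=> u [v [h1 h2 h3]]; exists u, v; split => //.
    exact/(@target_iff p s ns K w hb z C u v nz).
  exact/(@target_iff p s ns K w hb z C u v nz).
Qed.
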